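(* Let $G$ be a signed cyclic graph. Then $$F[G](A,B,d)=\sum_{S\in\mathscr{S}(G)}A^{e_{+}(S)+e_{-}(G-S)}B^{e_{-}(S)+e_{+}(G-S)}d^{bc(S)-1},$$ where the sum is over the set $\mathscr{S}(G)$ of all spanning subgraphs $S$ of $G$.
   Context: A signed cyclic graph is a finite graph with a cyclic ordering of half-edges at each vertex (equivalently an orientable ribbon graph) and a sign $\pm$ on each edge. A spanning subgraph $S$ consists of all vertices of $G$ and a subset of the edges, with the induced cyclic orders; $G-S$ is the spanning subgraph with exactly the edges of $G$ not in $S$; $e_{+}(S)$, $e_{-}(S)$ are the numbers of positive and negative edges of $S$; $bc(S)$ is the number of boundary components of the ribbon graph of $S$ (vertex discs with ribbons for the edges of $S$ attached in the cyclic order). The polynomial $F[G]$ is defined by a deletion–marking recursion: edges may be ''marked''; for an unmarked edge $e$, $G-e$ deletes $e$ and $G(\bar e)$ keeps $e$ and marks it; $F[G]=B\,F[G-e]+A\,F[G(\bar e)]$ if $e$ is positive, $F[G]=A\,F[G-e]+B\,F[G(\bar e)]$ if $e$ is negative; and if $H$ is a spanning subgraph all of whose edges are marked, $F[H]=d^{bc(H)-1}$. *)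

(* Defs.v *)
From mathcomp Require Import all_boot all_order all_algebra fingroup perm.
Set Implicit Arguments. Unset Strict Implicit. Unset Printing Implicit Defensive.
Import GRing.Theory.

(* A signed cyclic graph (orientable ribbon graph with signed edges).  Half-edges: E * bool,
   the two half-edges of edge e being (e,false) and (e,true).
   [ends h] is the vertex at which half-edge h is attached;
   [rot] is the cyclic ordering: a permutation of half-edges preserving the
   attaching vertex and acting as a single cycle on the half-edges at each
   vertex.  [sgn e = true] means e is positive, false means negative. *)
Record cgraph (V E : finType) := CGraph {
  ends : E * bool -> V;
  rot : {perm (E * bool)};
  rot_ends : forall h, ends (rot h) = ends h;
  rot_cycle : forall h h', ends h = ends h' -> fconnect rot h h';
  sgn : E -> bool
}.

Section Defs.
Variables (V E : finType) (G : cgraph V E).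

Definition opp_he (h : E * bool) : E * bool := (h.1, ~~ h.2).

(* induced cyclic order on the half-edges of the spanning subgraph with edge
   set S: the next half-edge (in the cyclic order of G) belonging to S *)
Definition rotS (S : {set E}) (h : E * bool) : E * bool :=
  let s := [seq iter k.+1 (rot G) h | k <- iota 0 #|{: E * bool}|] in
  nth h s (find (fun x => x.1 \in S) s).

(* boundary-walk permutation of the ribbon graph of S *)
Definition faceS (S : {set E}) (h : E * bool) : E * bool := rotS S (opp_he h).

Definition dartsS (S : {set E}) : {set E * bool} := [set h | h.1 \in S].

(* number of boundary components of the ribbon graph of S: cycles of the
   boundary walk on half-edges of S, plus one for each vertex with no edge
   of S attached (an isolated vertex disc). *)
Definition bc (S : {set E}) : nat :=
  #|[set [set y | fconnect (faceS S) x y] | x in dartsS S]|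
  + #|[set v : V | [forall h : E * bool, (h.1 \in S) ==> (ends G h != v)]]|.

Definition e_pos (S : {set E}) : nat := #|[set e in S | sgn G e]|.
Definition e_neg (S : {set E}) : nat := #|[set e in S | ~~ sgn G e]|.

(* [f Del Mark] is the value of F on the graph obtained from G by deleting
   the edges of Del and marking the edges of Mark (Del, Mark disjoint).
   [Frec f] says f satisfies the deletion–marking recursion and the base
   case (when all remaining edges are marked, the remaining graph is the
   spanning subgraph with edge set Mark). *)
Definition Frec (R : comPzRingType) (A B d : R) (f : {set E} -> {set E} -> R) :=
  (forall Del Mark : {set E}, [disjoint Del & Mark] ->
     forall e, e \notin Del -> e \notin Mark ->
     f Del Mark =
       if sgn G e then (B * f (e |: Del) Mark + A * f Del (e |: Mark))%R
       else (A * f (e |: Del) Mark + B * f Del (e |: Mark))%R)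
  /\ (forall Del Mark : {set E}, [disjoint Del & Mark] ->
        Del :|: Mark = setT -> f Del Mark = (d ^+ (bc Mark).-1)%R).

End Defs.

(* Main.v *)
Require Import Defs.
From mathcomp Require Import zify.
From mathcomp Require Import all_boot all_order all_algebra.
Import GRing.Theory.
Local Open Scope ring_scope.

Section Aux.
Variables (V E : finType) (G : cgraph V E) (R : comPzRingType) (A B d : R).

Definition wA (X : {set E}) : R := \prod_(e in X) (if sgn G e then A else B).
Definition wB (X : {set E}) : R := \prod_(e in X) (if sgn G e then B else A).

Definition gF (Del Mark : {set E}) : R :=
  \sum_(S : {set E} | (Mark \subset S) && (S \subset ~: Del))
     wA (S :\: Mark) * wB (~: S :\: Del) * d ^+ (bc G S).-1.

Lemma wA_split (X : {set E}) e : e \in X ->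
  wA X = (if sgn G e then A else B) * wA (X :\ e).
Proof.
move=> eX; rewrite /wA (bigD1 e) //=; congr (_ * _).
by apply: eq_bigl => x; rewrite !inE andbC.
Qed.

Lemma wB_split (X : {set E}) e : e \in X ->
  wB X = (if sgn G e then B else A) * wB (X :\ e).
Proof.
move=> eX; rewrite /wB (bigD1 e) //=; congr (_ * _).
by apply: eq_bigl => x; rewrite !inE andbC.
Qed.

Lemma gF_rec (Del Mark : {set E}) e : e \notin Del -> e \notin Mark ->
  gF Del Mark = (if sgn G e then B else A) * gF (e |: Del) Mark
              + (if sgn G e then A else B) * gF Del (e |: Mark).
Proof.
move=> eD eM; rewrite /gF (bigID (fun S : {set E} => e \in S)) /= addrC.
rewrite !mulr_sumr; congr (_ + _).
- apply: eq_big => S.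
    rewrite -andbA; congr (_ && _); rewrite andbC.
    apply/idP/idP.
      move=> /andP[eS /subsetP H]; apply/subsetP => x xS.
      rewrite !inE negb_or; have := H x xS; rewrite inE => ->.
      by rewrite andbT; apply: contraNN eS => /eqP <-.
    move/subsetP => H; apply/andP; split.
      by apply/negP => eS; have := H e eS; rewrite !inE eqxx.
    by apply/subsetP => x xS; have := H x xS; rewrite !inE negb_or => /andP[].
  move=> /andP[_ eS]; rewrite (wB_split _ e); last by rewrite !inE eS eD.
  have -> : ~: S :\: Del :\ e = ~: S :\: (e |: Del).
    by apply/setP => x; rewrite !inE negb_or; case: (x == e).
  by rewrite !mulrA [wA _ * _]mulrC.
- apply: eq_big => S.
    rewrite andbC andbA; congr (_ && _).
    by rewrite subUset sub1set andbC.
  move=> /andP[_ eS]; rewrite !mulrA; congr (_ * _ * _).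
  rewrite (wA_split _ e); last by rewrite !inE eS eM.
  by congr (_ * wA _); apply/setP => x; rewrite !inE negb_or andbA.
Qed.

Lemma gF_base (Del Mark : {set E}) : [disjoint Del & Mark] -> Del :|: Mark = setT ->
  gF Del Mark = d ^+ (bc G Mark).-1.
Proof.
move=> dis cov.
have HM : ~: Del = Mark.
  apply/setP => x; move/setP: cov => /(_ x); rewrite !inE.
  move/disjointFr: dis => /(_ x); case: (x \in Del) => //=.
  by move=> H _; rewrite H.
rewrite /gF HM (big_pred1 Mark); last first.
  move=> S.
  by rewrite /= eqEsubset andbC.
rewrite /wA /wB setDv big_set0 mul1r.
have -> : ~: Mark :\: Del = set0.
  by apply/setP => x; rewrite -HM !inE negbK andNb.
by rewrite big_set0 mul1r.
Qed.

Lemma gF_Frec : Frec G A B d gF.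
Proof.
split.
  move=> Del Mark _ e eD eM; rewrite (gF_rec _ _ _ eD eM).
  by case: (sgn G e) => //; rewrite addrC.
exact: gF_base.
Qed.

Lemma disjU1 (X Y : {set E}) e : e \notin Y -> [disjoint X & Y] ->
  [disjoint e |: X & Y].
Proof.
rewrite -!setI_eq0 => eY /eqP H; apply/eqP/setP => x.
move/setP: H => /(_ x); rewrite !inE.
by case: (eqVneq x e) => [->|] //=; rewrite (negbTE eY) andbF.
Qed.

Lemma Frec_unique f : Frec G A B d f ->
  forall n Del Mark, (#|~: (Del :|: Mark)| <= n)%N -> [disjoint Del & Mark] ->
  f Del Mark = gF Del Mark.
Proof.
move=> [Hrec Hbase]; elim=> [|n IH] Del Mark Hn dis.
  have cov : Del :|: Mark = setT.
    by apply/setP => x; move: Hn; rewrite leqn0 cards_eq0 => /eqP/setP/(_ x);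
       rewrite !inE => /negbFE ->.
  by rewrite Hbase // gF_base.
have [cov|] := eqVneq (Del :|: Mark) setT.
  by rewrite Hbase // gF_base.
move=> ncov.
have : ~: (Del :|: Mark) != set0.
  by apply: contraNneq ncov => H; rewrite -[_ :|: _]setCK H setC0.
case/set0Pn => e; rewrite !inE negb_or => /andP[eD eM].
have E1 : ~: (e |: Del :|: Mark) = ~: (Del :|: Mark) :\ e.
  by apply/setP => x; rewrite !inE !negb_or andbA.
have E2 : ~: (Del :|: (e |: Mark)) = ~: (Del :|: Mark) :\ e.
  by apply/setP => x; rewrite !inE !negb_or; case: (x == e); case: (x \in Del).
have Hcd : #|~: (Del :|: Mark)| = (#|~: (Del :|: Mark) :\ e|).+1.
  by rewrite (cardsD1 e) !inE negb_or eD eM.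
have H1 : (#|~: (e |: Del :|: Mark)| <= n)%N by rewrite E1; lia.
have H2 : (#|~: (Del :|: (e |: Mark))| <= n)%N by rewrite E2; lia.
rewrite (Hrec _ _ dis e eD eM) (gF_rec _ _ _ eD eM).
rewrite -!IH //.
- by case: (sgn G e) => //; rewrite addrC.
- by rewrite disjoint_sym disjU1 // disjoint_sym.
- by rewrite disjU1.
Qed.
Lemma wA_pow X : wA X = A ^+ e_pos G X * B ^+ e_neg G X.
Proof.
rewrite /wA /e_pos /e_neg -!prodr_const (bigID (fun e => sgn G e)) /=.
congr (_ * _); apply: eq_big => x; rewrite ?inE //.
- by move=> /andP[_ ->].
- by move=> /andP[_ /negbTE ->].
Qed.

Lemma wB_pow X : wB X = B ^+ e_pos G X * A ^+ e_neg G X.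
Proof.
rewrite /wB /e_pos /e_neg -!prodr_const (bigID (fun e => sgn G e)) /=.
congr (_ * _); apply: eq_big => x; rewrite ?inE //.
- by move=> /andP[_ ->].
- by move=> /andP[_ /negbTE ->].
Qed.

End Aux.

Theorem mainTheorem6 (V E : finType) (G : cgraph V E)
    (R : comPzRingType) (A B d : R) :
  (0 < #|V|)%N ->
  (exists f, Frec G A B d f) /\
  (forall f, Frec G A B d f ->
     f set0 set0 =
     \sum_(S : {set E})
        A ^+ (e_pos G S + e_neg G (~: S)) *
        B ^+ (e_neg G S + e_pos G (~: S)) *
        d ^+ (bc G S).-1).
Proof.
move=> _; split; first by exists (gF _ _ G _ A B d); exact: gF_Frec.
move=> f Hf; rewrite (Frec_unique _ _ _ _ _ _ _ _ Hf _ _ _ (leqnn _)) ?disjoint0 //.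
rewrite /gF; apply: eq_big => S; first by rewrite sub0set setC0 subsetT.
move=> _; rewrite !setD0 wA_pow wB_pow !exprD; congr (_ * _).
rewrite mulrA mulrAC -!mulrA; congr (_ * _); rewrite mulrC -mulrA; congr (_ * _).
by rewrite mulrC.
by rewrite -setI_eq0 setI0.
Qed.
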